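(* Let $\sim$ (for each $N$) be an equivalence relation on $\{1,\dots,N\}^2$ with $(p,q)\sim(q,p)$ satisfying conditions (C2) and (C3). Let $k\ge 4$ be even, $\pi\in\mathcal B_{k/2}$, and suppose $\{m,m+1\}\in\pi$ with $1\le m\le k-2$; let $\tilde\pi:=\pi\setminus^\bullet\{m,m+1\}\in\mathcal B_{k/2-1}$. Then, as $N\to\infty$, $$\#\overline{E}^{(N)}_k(\pi)\le N\cdot\#\overline{E}^{(N)}_{k-2}(\tilde\pi)+o\big(N^{1+k/2}\big).$$
   Context: Conditions on $\sim$ (as $N\to\infty$): (C2) $\max_{p,q,r}\#\{s:(p,q)\sim(r,s)\}\le B<\infty$ with $B$ independent of $N$; (C3) $\#\{(p,q,r)\in\{1,\dots,N\}^3:(p,q)\sim(q,r),\ r\neq p\}=o(N^2)$. A pair-partition of $\{1,\dots,k\}$ is a partition all of whose blocks have exactly two elements; it is crossing if there exist $1\le a<b<c<d\le k$ with $\{a,c\},\{b,d\}\in\pi$, and non-crossing otherwise. For even $k$, $\mathcal B_{k/2}$ denotes the set of non-crossing pair-partitions of $\{1,\dots,k\}$. For $k\ge 4$, $\pi\in\mathcal B_{k/2}$ and a block $\{m,m+1\}\in\pi$ with $1\le m\le k-2$, $\pi\setminus^\bullet\{m,m+1\}\in\mathcal B_{k/2-1}$ denotes the pair-partition of $\{1,\dots,k-2\}$ obtained by deleting the block $\{m,m+1\}$ and relabelling every remaining element $a>m$ as $a-2$. $\pi$-adopted sequences. Let $\mathcal G$ be a countable set and $\pi\in\mathcal B_{k/2}$.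 A sequence $g=(g_1,\dots,g_k)\in\mathcal G^k$ is $\pi$-adopted, defined recursively in $k$: for $k=2$ (so $\pi=\{\{1,2\}\}$), iff $g_1\neq g_2$; for $k\ge 4$, iff for every block of $\pi$ of the form $\{m,m+1\}$ with $1\le m\le k-2$: (a) $g_m=g_{m+2}$ and $g_{m+1}\neq g_s$ for all $s\neq m+1$; and (b) $(g_1,\dots,g_m,g_{m+3},\dots,g_k)$ is $\pi\setminus^\bullet\{m,m+1\}$-adopted. For a partition $\pi$ of $\{1,\dots,k\}$, $\mathcal E^{(N)}_k(\pi)$ is the set of $i=(i_1,\dots,i_k)\in\{1,\dots,N\}^k$ such that, with $i_{k+1}:=i_1$, for all $l,m$: $l,m$ lie in the same block of $\pi$ iff $(i_l,i_{l+1})\sim(i_m,i_{m+1})$. For $\pi\in\mathcal B_{k/2}$, $\overline{E}^{(N)}_k(\pi)$ is the set of those $i\in\mathcal E^{(N)}_k(\pi)$ which are not $\pi$-adopted (as sequences in $\mathcal G^k$ with $\mathcal G=\{1,\dots,N\}$). *)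

(* Defs.v *)
From HB Require Import structures.
From mathcomp Require Import all_boot all_order all_algebra.
Set Implicit Arguments. Unset Strict Implicit. Unset Printing Implicit Defensive.
Import Order.TTheory GRing.Theory Num.Theory.

(* Positions 1..k of the paper are represented 0-based by 'I_k, and the
   index set {1..N} by 'I_N (values 0..N-1). *)

Definition pair_partition (k : nat) (P : {set {set 'I_k}}) : bool :=
  partition P [set: 'I_k] && [forall B in P, #|B| == 2].

Definition crossing (k : nat) (P : {set {set 'I_k}}) : bool :=
  [exists a : 'I_k, exists b : 'I_k, exists c : 'I_k, exists d : 'I_k,
     [&& a < b, b < c, c < d, [set a; c] \in P & [set b; d] \in P]].

Definition NCpair (k : nat) (P : {set {set 'I_k}}) : bool :=
  pair_partition P && ~~ crossing P.

Definition blk (k m : nat) : {set 'I_k} := [set x : 'I_k | (val x == m) || (val x == m.+1)].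

(* relabelling: new position j of {0..k-3} corresponds to old position shift m j *)
Definition shift (m j : nat) : nat := if j < m then j else j.+2.

(* P \•{m,m+1}: delete the block {m,m+1} and relabel remaining a >= m+2 as a-2 *)
Definition delblock (k : nat) (P : {set {set 'I_k}}) (m : nat) : {set {set 'I_k.-2}} :=
  [set [set j : 'I_k.-2 | [exists x in B, val x == shift m j]] | B : {set 'I_k} in P & B != blk k m].

(* the sequence g with the entries at (0-based) positions m+1, m+2 removed *)
Definition drop2 (T : Type) (k : nat) (g : 'I_k.+2 -> T) (m : nat) (j : 'I_k) : T :=
  if j <= m then g (widen_ord (leq_trans (leqnSn k) (leqnSn k.+1)) j)
  else g (lift ord0 (lift ord0 j)).

Fixpoint adopted (T : eqType) (k : nat) : {set {set 'I_k}} -> ('I_k -> T) -> bool :=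
  match k return {set {set 'I_k}} -> ('I_k -> T) -> bool with
  | 0 => fun _ _ => false
  | 1 => fun _ _ => false
  | k1.+2 => fun P g =>
      if k1 is 0 then g ord0 != g ord_max
      else (* k >= 4 (or odd k >= 3, never used) *)
      [forall m : 'I_k1.+2,
         ((m.+2 < k1.+2) && (blk k1.+2 m \in P)) ==>
         [&& [exists m2 : 'I_k1.+2, (val m2 == m.+2) && (g m == g m2)],
             [forall m1 : 'I_k1.+2, (val m1 == m.+1) ==>
                [forall s : 'I_k1.+2, (s != m1) ==> (g m1 != g s)]]
           & @adopted T k1 (delblock P m) (@drop2 T k1 g m)]]
  end.

Definition Eset (sim : forall N : nat, rel ('I_N * 'I_N)) (N k : nat)
    (P : {set {set 'I_k}}) : {set {ffun 'I_k -> 'I_N}} :=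
  [set i : {ffun 'I_k -> 'I_N} | [forall l : 'I_k, forall m : 'I_k,
     [exists B in P, (l \in B) && (m \in B)] ==
     sim N (i l, i (ordS l)) (i m, i (ordS m))]].

Definition Ebar (sim : forall N : nat, rel ('I_N * 'I_N)) (N k : nat)
    (P : {set {set 'I_k}}) : {set {ffun 'I_k -> 'I_N}} :=
  [set i in Eset sim N P | ~~ adopted P (fun l => i l)].

Definition littleo (f g : nat -> rat) : Prop :=
  forall eps : rat, (0 < eps)%R -> exists N0 : nat, forall N : nat, N0 <= N ->
    (`|f N| <= eps * g N)%R.

(* Main.v *)
Require Import Defs.
From HB Require Import structures.
From mathcomp Require Import all_boot all_order all_algebra zify ring lra.
From Stdlib Require Import FunctionalExtensionality.

Module Helpers.
Set Implicit Arguments. Unset Strict Implicit.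
Definition invb k (P : {set {set 'I_k}}) := forall B1 B2 (x : 'I_k),
  B1 \in P -> B2 \in P -> x \in B1 -> x \in B2 -> B1 = B2.

Definition pre k m (B : {set 'I_k}) : {set 'I_k.-2} :=
  [set j : 'I_k.-2 | [exists x in B, val x == shift m j]].

Lemma shift_lt k m (j : 'I_k.-2) : shift m j < k.
Proof. have := ltn_ord j; rewrite /shift; case: ifP => _; lia. Qed.

Definition shO k m (j : 'I_k.-2) : 'I_k := Ordinal (shift_lt m j).

Lemma in_pre k m (B : {set 'I_k}) j : (j \in pre m B) = (shO m j \in B).
Proof.
rewrite inE; apply/existsP/idP => [[x /andP [xB /eqP e]]|h].
  by have -> : shO m j = x by apply: val_inj; rewrite /= -e.
by exists (shO m j); rewrite h eqxx.
Qed.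

Lemma delblockP k (P : {set {set 'I_k}}) m C :
  reflect (exists2 B, (B \in P) && (B != blk k m) & C = pre m B) (C \in delblock P m).
Proof.
apply: (iffP imsetP) => [[B hB ->]|[B hB ->]].
  by exists B; rewrite // inE in hB.
by exists B; rewrite // inE.
Qed.

Lemma inv_del k (P : {set {set 'I_k}}) m : invb P -> invb (delblock P m).
Proof.
move=> iP C1 C2 x /delblockP [B1 /andP [h1 _] ->] /delblockP [B2 /andP [h2 _] ->].
rewrite !in_pre => x1 x2; by rewrite (iP _ _ _ h1 h2 x1 x2).
Qed.

Lemma gap k (P : {set {set 'I_k}}) m m' : invb P -> m.+2 < k -> m'.+2 < k ->
  blk k m \in P -> blk k m' \in P -> m != m' -> (m'.+1 < m) || (m.+1 < m').
Proof.
move=> iP hm hm' b b' ne.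
have key : forall a b, a.+2 < k -> b = a.+1 -> blk k a \in P -> blk k b \in P -> False.
  move=> a c ha -> ba bc.
  have E := iP _ _ (Ordinal (ltnW ha)) ba bc.
  have E2 : blk k a = blk k a.+1.
    by apply: E; rewrite inE /= eqxx ?orbT.
  have : (Ordinal (ltnW (ltnW ha))) \in blk k a by rewrite inE /= eqxx.
  rewrite E2 inE /=; lia.
case: (ltngtP m' m) => h.
- case: (boolP (m'.+1 < m)) => //= h2.
  have e : m = m'.+1 by lia.
  by case: (key m' m hm' e b' b).
- case: (boolP (m.+1 < m')) => h2; first by rewrite orbT.
  have e : m' = m.+1 by lia.
  by case: (key m m' hm e b b').
- by rewrite h eqxx in ne.
Qed.

Lemma pre_blk k m x : x.+2 < k -> (x.+1 < m) || (m.+1 < x) ->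
  pre m (blk k x) = blk k.-2 (if x < m then x else x - 2).
Proof.
move=> hx hxm; apply/setP => j; rewrite in_pre !inE /= /shift.
have := ltn_ord j.
case: ifP => h1; case: ifP => h2 hj; apply/idP/idP; lia.
Qed.

Lemma pre_blk_inv k (P : {set {set 'I_k}}) m x B : invb P -> x.+2 < k -> (x.+1 < m) || (m.+1 < x) ->
  blk k x \in P -> B \in P -> pre m B = blk k.-2 (if x < m then x else x - 2) -> B = blk k x.
Proof.
move=> iP hx hxm bx hB e.
have hj : (if x < m then x else x - 2) < k.-2 by case: ifP; lia.
set j := Ordinal hj.
have : j \in pre m B by rewrite e inE eqxx.
rewrite in_pre => hjB.
apply: (iP _ _ _ hB bx hjB); rewrite inE /= /shift /=; case: ifP; case: ifP; lia.
Qed.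
Section NF.
Variable T : eqType.

Definition nf k (g : 'I_k -> T) (x0 : T) (n : nat) : T :=
  match (insub n : option 'I_k) with Some i => g i | None => x0 end.

Lemma nfE k (g : 'I_k -> T) x0 (i : 'I_k) : nf g x0 i = g i.
Proof. by rewrite /nf valK. Qed.

Lemma nfO k (g : 'I_k -> T) x0 n (h : n < k) : nf g x0 n = g (Ordinal h).
Proof. by rewrite -(nfE g x0 (Ordinal h)). Qed.

Definition dsh (m j : nat) := if j <= m then j else j.+2.

Lemma nf_drop2 k (g : 'I_k.+2 -> T) m x0 j : j < k -> nf (drop2 g m) x0 j = nf g x0 (dsh m j).
Proof.
move=> hj; rewrite (nfO _ _ hj) /drop2 /dsh /=; case: ifP => h.
  by rewrite -(nfE g x0).
by rewrite -(nfE g x0).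
Qed.

Definition AcondN (gn : nat -> T) k m :=
  gn m = gn m.+2 /\ forall s, s < k -> s != m.+1 -> gn m.+1 != gn s.

Lemma AcondN_ext f f' k m : (forall j, j < k -> f j = f' j) -> m.+2 < k ->
  AcondN f k m -> AcondN f' k m.
Proof.
move=> e hm [h1 h2]; split; first by rewrite -!e //; lia.
by move=> s hs ns; rewrite -!e //; [apply: h2 | lia].
Qed.

Lemma AcondP k (g : 'I_k -> T) x0 (mo : 'I_k) : mo.+2 < k ->
 reflect (AcondN (nf g x0) k mo)
  ([exists m2 : 'I_k, (val m2 == mo.+2) && (g mo == g m2)] &&
   [forall m1 : 'I_k, (val m1 == mo.+1) ==> [forall s : 'I_k, (s != m1) ==> (g m1 != g s)]]).
Proof.
move=> hm.
have h1 : mo.+1 < k by lia.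
apply: (iffP andP) => [[/existsP [m2 /andP [/eqP e2 /eqP e]] /forallP h]|[ha hu]].
  split.
    by rewrite nfE -e2 nfE.
  move=> s hs ns.
  have := h (Ordinal h1); rewrite /= eqxx /= => /forallP /(_ (Ordinal hs)).
  rewrite (nfO _ _ h1) (nfO _ _ hs); apply: contraTT => /negPn/eqP e3.
  rewrite e3 eqxx implybF negbK.
  exact: ns.
split.
  apply/existsP; exists (Ordinal hm); rewrite /= eqxx /=.
  by rewrite -(nfE g x0) ha (nfO _ _ hm).
apply/forallP => m1; apply/implyP => /eqP e1; apply/forallP => s; apply/implyP => ns.
have := hu s (ltn_ord s) (_ : val s != mo.+1).
rewrite -e1 !nfE; apply.
by apply: contra ns => /eqP e; apply/eqP/val_inj; rewrite /= e.
Qed.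

Lemma undsh k m s : m.+2 < k -> s < k -> s != m.+1 -> s != m.+2 ->
  [/\ (if s <= m then s else s - 2) < k - 2 & dsh m (if s <= m then s else s - 2) = s].
Proof. rewrite /dsh; case: ifP => h1 hm hs n1 n2; split; try case: ifP; lia. Qed.

Lemma T1 gn k m m' : m.+2 < k -> m'.+2 < k -> (m'.+1 < m) || (m.+1 < m') ->
  AcondN gn k m -> AcondN (fun j => gn (dsh m j)) (k - 2) (if m' < m then m' else m' - 2) ->
  AcondN gn k m'.
Proof.
move=> hm hm' gp [A1 U1] [A2 U2].
have U : forall s', s' < k - 2 -> s' != (if m' < m then m' else m' - 2).+1 ->
   dsh m (if m' < m then m' else m' - 2).+1 = m'.+1 -> gn m'.+1 != gn (dsh m s').
  by move=> s' hs' ns' e; rewrite -e; apply: U2.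
have E1 : dsh m (if m' < m then m' else m' - 2).+1 = m'.+1 by rewrite /dsh; case: ifP; case: ifP; lia.
split.
  move: A2; rewrite /dsh; case: (ltnP m' m) => h.
    by rewrite !ifT //; lia.
  case: (eqVneq m' m.+2) => e.
    rewrite e subn2 /= leqnn ltnNge leqnSn /= => <-; exact: esym.
  rewrite !ifF; [ | lia | lia].
  by have -> : (m' - 2).+2 = m' by lia.
move=> s hs ns.
case: (eqVneq s m.+1) => e1.
  rewrite e1 eq_sym; apply: U1; lia.
case: (eqVneq s m.+2) => e2.
  rewrite e2 -A1.
  have : gn m'.+1 != gn (dsh m m) by apply: U => //; [lia | case: ifP; lia].
  by rewrite /dsh leqnn.
have [hs' ds] := undsh hm hs e1 e2.
rewrite -ds; apply: U => //.
move: ns; case: ifP; case: ifP; lia.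
Qed.

Lemma T2 gn k m m' : m.+2 < k -> m'.+2 < k -> (m'.+1 < m) || (m.+1 < m') ->
  AcondN gn k m -> AcondN gn k m' ->
  AcondN (fun j => gn (dsh m' j)) (k - 2) (if m < m' then m else m - 2).
Proof.
move=> hm hm' gp [A1 U1] [A1' U1'].
have E1 : dsh m' (if m < m' then m else m - 2).+1 = m.+1 by rewrite /dsh; case: ifP; case: ifP; lia.
split.
  rewrite /dsh; case: (ltnP m m') => h.
    by rewrite !ifT //; lia.
  case: (eqVneq m' (m - 2)) => e.
    rewrite -e leqnn ifF; last by lia.
    have em : m = m'.+2 by lia.
    by rewrite A1' -em A1 em.
  rewrite !ifF; [ | lia | lia].
  by have -> : (m - 2).+2 = m by lia.
move=> s hs ns; rewrite E1; apply: U1; first by rewrite /dsh; case: ifP; lia.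
move: ns; rewrite /dsh; case: ifP; case: ifP; lia.
Qed.
End NF.

Lemma pre_comm k m m' (B : {set 'I_k}) : (m'.+1 < m) || (m.+1 < m') ->
  pre (if m < m' then m else m - 2) (pre m' B) = pre (if m' < m then m' else m' - 2) (pre m B).
Proof.
move=> gp; apply/setP => j; rewrite !in_pre; congr (_ \in B); apply: val_inj => /=.
rewrite /shift; case: ifP; case: ifP; case: ifP; case: ifP; case: ifP; case: ifP; lia.
Qed.

Lemma del_sub k (P : {set {set 'I_k}}) m m' C : invb P -> m.+2 < k -> m'.+2 < k ->
  (m'.+1 < m) || (m.+1 < m') -> blk k m \in P -> blk k m' \in P ->
  C \in delblock (delblock P m') (if m < m' then m else m - 2) ->
  C \in delblock (delblock P m) (if m' < m then m' else m' - 2).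
Proof.
move=> iP hm hm' gp bm bm' /delblockP [C1 /andP [/delblockP [B /andP [hB nB] ->] nC1] ->].
have gp' : (m.+1 < m') || (m'.+1 < m) by rewrite orbC.
have nBm : B != blk k m.
  apply: contra nC1 => /eqP ->; rewrite pre_blk //; apply/eqP; congr blk; case: ifP; lia.
apply/delblockP; exists (pre m B); last by rewrite pre_comm.
apply/andP; split; first by apply/delblockP; exists B => //; rewrite hB nBm.
apply: contra nB => /eqP e; apply/eqP; exact: (pre_blk_inv iP hm' gp bm' hB e).

Qed.

Lemma del_comm k (P : {set {set 'I_k}}) m m' : invb P -> m.+2 < k -> m'.+2 < k ->
  (m'.+1 < m) || (m.+1 < m') -> blk k m \in P -> blk k m' \in P ->
  delblock (delblock P m') (if m < m' then m else m - 2) =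
  delblock (delblock P m) (if m' < m then m' else m' - 2).
Proof.
move=> iP hm hm' gp bm bm'; apply/setP => C; apply/idP/idP; first exact: del_sub.
by apply: del_sub => //; rewrite orbC.
Qed.

Lemma drop2E (T : eqType) k (g : 'I_k.+2 -> T) m (j : 'I_k) (x : 'I_k.+2) :
  val x = dsh m j -> drop2 g m j = g x.
Proof.
rewrite /drop2 /dsh => e; case: ifP => h; congr g; apply: val_inj; rewrite /= e h //.
Qed.

Lemma dsh_lt k m j : j < k -> dsh m j < k.+2.
Proof. rewrite /dsh; case: ifP; lia. Qed.

Lemma drop2_comm (T : eqType) k (g : 'I_k.+4 -> T) m m' : (m'.+1 < m) || (m.+1 < m') ->
  drop2 (drop2 g m') (if m < m' then m else m - 2) =
  drop2 (drop2 g m) (if m' < m then m' else m' - 2).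
Proof.
move=> gp; apply: functional_extensionality => j.
set a := (if m < m' then m else m - 2); set b := (if m' < m then m' else m' - 2).
have h1 := dsh_lt a (ltn_ord j). have h2 := dsh_lt b (ltn_ord j).
rewrite (@drop2E _ _ _ _ _ (Ordinal h1)) // (@drop2E _ _ _ _ _ (Ordinal h2)) //.
have h3 := dsh_lt m' h1. have h4 := dsh_lt m h2.
rewrite (@drop2E _ _ _ _ _ (Ordinal h3)) // (@drop2E _ _ _ _ _ (Ordinal h4)) //.
congr g; apply: val_inj => /=; rewrite /a /b /dsh.
case: ifP; case: ifP; case: ifP; case: ifP; case: ifP; case: ifP; lia.
Qed.

Lemma blk_neq k m m' : m.+1 < k -> (m'.+1 < m) || (m.+1 < m') -> blk k m != blk k m'.
Proof.
move=> hm gp; apply/eqP => e.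
have : Ordinal (ltnW hm) \in blk k m' by rewrite -e inE eqxx.
rewrite inE /=; lia.
Qed.

Lemma adoptedE (T : eqType) n (P : {set {set 'I_n.+3}}) (g : 'I_n.+3 -> T) :
  adopted P g = [forall m : 'I_n.+3,
         ((m.+2 < n.+3) && (blk n.+3 m \in P)) ==>
         [&& [exists m2 : 'I_n.+3, (val m2 == m.+2) && (g m == g m2)],
             [forall m1 : 'I_n.+3, (val m1 == m.+1) ==>
                [forall s : 'I_n.+3, (s != m1) ==> (g m1 != g s)]]
           & @adopted T n.+1 (delblock P m) (@drop2 T n.+1 g m)]].
Proof. by []. Qed.

Lemma consist (T : eqType) (x0 : T) : forall k1 (P : {set {set 'I_k1.+2}}) (g : 'I_k1.+2 -> T) (m : nat),
  invb P -> m.+2 < k1.+2 -> blk k1.+2 m \in P -> AcondN (nf g x0) k1.+2 m ->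
  adopted (delblock P m) (drop2 g m) -> adopted P g.
Proof.
move=> k1; have [n] := ubnP k1; elim: n k1 => // n IH k1 hk1 P g m iP hm bm A hred.
case: k1 hk1 P g m iP hm bm A hred => [|[|[|k2]]] hk1 P g m iP hm bm A hred.
- lia.
- by [].
- rewrite (adoptedE (n:=1)); apply/forallP => mo; apply/implyP => /andP [hmo bmo].
  have [e|ne] := eqVneq (val mo) m.
    rewrite andbA; apply/andP; split; last by rewrite e.
    by apply/(AcondP _ x0 hmo); rewrite e.
  have gp : ((mo:nat).+1 < m) || (m.+1 < mo) by apply: gap iP hm hmo bm bmo _; rewrite eq_sym.
  exfalso; case/orP: gp; lia.
- rewrite (adoptedE (n:=k2.+2)); apply/forallP => mo; apply/implyP => /andP [hmo bmo].
  have [e|ne] := eqVneq (val mo) m.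
    rewrite andbA; apply/andP; split; last by rewrite e.
    by apply/(AcondP _ x0 hmo); rewrite e.
  change (is_true (nat_of_ord mo != m)) in ne.
  set m' := nat_of_ord mo in hmo bmo ne *.
  have gp : (m'.+1 < m) || (m.+1 < m') by apply: gap iP hm hmo bm bmo _; rewrite eq_sym.
  have gp' : (m.+1 < m') || (m'.+1 < m) by rewrite orbC.
  have gpn : m'.+1 < m \/ m.+1 < m' by apply/orP.
  move: hred; rewrite (adoptedE (n:=k2)) => hred.
  set m'' := (if m' < m then m' else m' - 2).
  have hm'' : m''.+2 < k2.+3 by rewrite /m''; case: ifP; lia.
  have hb'' : blk k2.+3 m'' \in delblock P m.
    apply/delblockP; exists (blk k2.+1.+4 m'); first by rewrite bmo /= eq_sym blk_neq //; lia.
    by rewrite pre_blk.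
  move/forallP: hred => /(_ (Ordinal (ltnW (ltnW hm'')))) /implyP /(_ (introT andP (conj hm'' hb''))).
  rewrite andbA => /andP [/(@AcondP _ _ _ x0 (Ordinal (ltnW (ltnW hm''))) hm'') Ared cred].
  have Ared' : AcondN (fun j => nf g x0 (dsh m j)) (k2.+1.+4 - 2) m''.
    apply: AcondN_ext Ared => //; move=> j hj; rewrite nf_drop2 //.
  have A' := T1 hm hmo gp A Ared'.
  rewrite andbA; apply/andP; split; first by apply/(AcondP _ x0 hmo).
  set ms := (if m < m' then m else m - 2).
  have hms : ms.+2 < k2.+3 by rewrite /ms; case: ifP; lia.
  apply: (IH k2.+1 _ _ _ ms) => //.
  + lia.
  + by have := @inv_del _ P m' iP.
  + apply/(@delblockP _ P m'); exists (blk k2.+1.+4 m); first by rewrite bm /= blk_neq //; lia.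
    by rewrite pre_blk.
  + have := T2 hm hmo gp A A'; rewrite -/ms => A2.
    apply: AcondN_ext A2 => // j hj; rewrite nf_drop2 //.
  + rewrite /ms (del_comm iP hm hmo gp bm bmo) (drop2_comm g gp); exact: cred.
Qed.

Lemma card_fibers (A T : finType) (X : {set A}) (f : A -> T) :
  #|X| = \sum_(v in f @: X) #|[set x in X | f x == v]|.
Proof.
rewrite -sum1_card (partition_big f (mem (f @: X))) /=; last first.
  by move=> x xX; apply: imset_f.
apply: eq_bigr => v _; rewrite -sum1_card; apply: eq_bigl => x; by rewrite inE.
Qed.

Lemma walk_bound (A T : finType) (S : {set A}) (n : nat) (obs : nat -> A -> T) (c : nat -> nat) :
  (forall a b, a \in S -> b \in S -> (forall j, j < n -> obs j a = obs j b) -> a = b) ->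
  (forall j a, j < n -> a \in S ->
     #|[set obs j b | b in [set b in S | [forall l : 'I_j, obs l b == obs l a]]]| <= c j) ->
  #|S| <= \prod_(j < n) c j.
Proof.
move=> inj hc.
pose agree j a := [set b in S | [forall l : 'I_j, obs l b == obs l a]].
have claim : forall d j a, j + d = n -> a \in S -> #|agree j a| <= \prod_(j <= l < n) c l.
  elim=> [|d IH] j a e aS.
    rewrite addn0 in e; rewrite big_geq; last by rewrite e.
    apply: leq_trans (_ : #|[set a]| <= 1); last by rewrite cards1.
    apply: subset_leq_card; apply/subsetP => b; rewrite /agree !inE => /andP [bS /forallP h].
    apply/eqP; apply: inj => // l hl.
    have hl' : l < j by rewrite e.
    by have /eqP := h (Ordinal hl').
  have hjn : j < n by lia.
  rewrite big_ltn // (card_fibers _ (obs j)).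
  apply: leq_trans (_ : \sum_(v in obs j @: agree j a) \prod_(j.+1 <= l < n) c l <= _).
    apply: leq_sum => v /imsetP [b0 hb0 ->].
    have b0S : b0 \in S by move: hb0; rewrite inE => /andP [].
    apply: leq_trans (IH j.+1 b0 _ b0S); last by lia.
    apply: subset_leq_card; apply/subsetP => b; rewrite !inE => /andP [/andP [bS /forallP hb] /eqP ej].
    rewrite bS /=; apply/forallP => l.
    case: (ltnP l j) => hl.
      have /eqP -> := hb (Ordinal hl).
      move: hb0; rewrite inE => /andP [_ /forallP /(_ (Ordinal hl)) /eqP ->] //.
    have -> : (l : nat) = j by have := ltn_ord l; lia.
    by rewrite ej.
  rewrite sum_nat_const leq_mul2r; apply/orP; right.
  exact: hc.
case: (set_0Vmem S) => [->|[a aS]]; first by rewrite cards0.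
apply: leq_trans (_ : #|agree 0 a| <= _).
  apply: subset_leq_card; apply/subsetP => b bS; rewrite inE bS /=; apply/forallP => -[] //.
rewrite -(big_mkord xpredT).
by apply: claim.
Qed.
Lemma mod2 x k : x < k + k -> x %% k = if x < k then x else x - k.
Proof.
move=> h; case: ifP => h1; first by rewrite modn_small.
have -> : x = (x - k) + k by lia.
by rewrite modnDr modn_small; lia.
Qed.

Lemma card_cover (A T : finType) (X : {set A}) (I : {pred T}) (S : T -> {set A}) :
  (forall x, x \in X -> exists2 t, t \in I & x \in S t) -> #|X| <= \sum_(t in I) #|S t|.
Proof.
move=> h.
apply: leq_trans (_ : #|\bigcup_(t in I) S t| <= _).
  apply: subset_leq_card; apply/subsetP => x /h [t tI xS]; apply/bigcupP; by exists t.
elim/big_rec2: _ => [|t s U _ hU]; first by rewrite cards0.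
rewrite cardsU; apply: leq_trans (leq_subr _ _) _.
by rewrite leq_add2l.
Qed.

Section Count.
Variables (N n : nat).
Local Notation k := n.+4.
Variable simF : forall N : nat, rel ('I_N * 'I_N).
Variable P : {set {set 'I_k}}.
Hypothesis HP : pair_partition P.
Variable m : nat.
Hypothesis Hm : m.+2 < k.
Hypothesis Hblk : blk k m \in P.
Variable B : nat.
Hypothesis HB : forall p q r : 'I_N, #|[set s | simF (p, q) (r, s)]| <= B.

Lemma ord_eq k' (a b : 'I_k') : nat_of_ord a = nat_of_ord b -> a = b.
Proof. exact: val_inj. Qed.

Definition posO j : 'I_k := Ordinal (ltn_pmod (m.+2 + j) (isT : 0 < k)).

Lemma posv j : j < k -> nat_of_ord (posO j) = if m.+2 + j < k then m.+2 + j else m.+2 + j - k.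
Proof. move=> hj; rewrite /= mod2 //; lia. Qed.

Lemma posS j : ordS (posO j) = posO j.+1.
Proof. by apply: val_inj; rewrite /= -addn1 modnDml addn1 addnS. Qed.

Lemma pos_surj (x : 'I_k) : exists2 j, j < k & posO j = x.
Proof.
have hx := ltn_ord x.
exists (if m.+2 <= x then x - m.+2 else x + k - m.+2); first by case: (leqP m.+2 x) => h; lia.
apply: ord_eq; case: (leqP m.+2 x) => h1; rewrite posv; try lia; case: ifP; lia.
Qed.

Lemma pos_inj j1 j2 : j1 < k -> j2 < k -> posO j1 = posO j2 -> j1 = j2.
Proof.
move=> h1 h2 /(congr1 (@nat_of_ord _)); rewrite !posv //; case: ifP; case: ifP; lia.
Qed.

Lemma pos_mid j : j <= n.+1 -> (nat_of_ord (posO j) != m) && (nat_of_ord (posO j) != m.+1).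
Proof. move=> hj; rewrite posv; last by lia. case: ifP; lia. Qed.

Lemma pos_first : nat_of_ord (posO 0) = m.+2.
Proof. rewrite posv //; case: ifP; lia. Qed.

Lemma pos_last : nat_of_ord (posO n.+3) = m.+1.
Proof. rewrite posv //; case: ifP; lia. Qed.

Lemma pos_pen : nat_of_ord (posO n.+2) = m.
Proof. rewrite posv //; case: ifP; lia. Qed.

Definition ES := Eset (@simF) N P.

Lemma ESP (i : {ffun 'I_k -> 'I_N}) (l l' : 'I_k) (Bk : {set 'I_k}) :
  i \in ES -> Bk \in P -> l \in Bk -> l' \in Bk ->
  simF (i l, i (ordS l)) (i l', i (ordS l')).
Proof.
rewrite inE => /forallP /(_ l) /forallP /(_ l') /eqP <- hB hl hl'.
by apply/existsP; exists Bk; rewrite hB hl hl'.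
Qed.

Definition det j := [exists t : 'I_k, (t.+2 <= j) &&
   [exists Bk in P, (posO t \in Bk) && (posO j.-1 \in Bk)]].

Definition agree (S : {set {ffun 'I_k -> 'I_N}}) j a :=
  [set b in S | [forall l : 'I_j, b (posO l) == a (posO l)]].

Lemma agreeP S j a b l : b \in agree S j a -> l < j -> b (posO l) = a (posO l).
Proof. by rewrite inE => /andP [_ /forallP h] hl; apply/eqP; exact: (h (Ordinal hl)). Qed.

Lemma agreeS S j a b : b \in agree S j a -> b \in S.
Proof. by rewrite inE => /andP []. Qed.

Lemma step_bound (S : {set {ffun 'I_k -> 'I_N}}) j a : S \subset ES -> 0 < j -> j < k ->
  #|[set (b : {ffun _ -> _}) (posO j) | b in agree S j a]| <= if det j then B else N.
Proof.
move=> sS j0 jk; case: ifP => hd; last first.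
  by apply: leq_trans (max_card _) _; rewrite card_ord.
case/existsP: hd => t /andP [ht /existsP [Bk /andP [hBk /andP [h1 h2]]]].
apply: leq_trans (HB (a (posO t)) (a (posO t.+1)) (a (posO j.-1))).
apply: subset_leq_card; apply/subsetP => s /imsetP [b hb ->].
rewrite inE.
have bS : b \in ES by move: hb; rewrite inE => /andP [/(subsetP sS)].
have := ESP bS hBk h1 h2; rewrite !posS.
rewrite (agreeP hb (l:=t)); last by lia.
rewrite (agreeP hb (l:=t.+1)); last by lia.
rewrite (agreeP hb (l:=j.-1)); last by lia.
by rewrite prednK.
Qed.

Lemma coverP : cover P = setT.
Proof. by case/andP: HP => /andP [/eqP -> _] _. Qed.

Lemma trivP : trivIset P.
Proof. by case/andP: HP => /andP [_ /andP [-> _]] _. Qed.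

Lemma cardP : #|P| = k./2.
Proof.
have e := card_partition (andP HP).1; rewrite cardsT card_ord in e.
rewrite (eq_bigr (fun _ => 2)) in e; last by move=> Bk hB; case/andP: HP => _ /forallP /(_ Bk) /implyP /(_ hB) /eqP.
rewrite sum_nat_const in e.
have : (#|P| * 2)./2 = k./2 by rewrite -e.
by rewrite muln2 doubleK.
Qed.

Definition qf (j : 'I_k) := (0 < j) && (j <= n.+2) && ~~ det j.

Lemma free_count : #|[set j | qf j]| <= k./2 - 1.
Proof.
pose f (j : 'I_k) := pblock P (posO j.-1).
have inB : forall j, posO j \in pblock P (posO j) by move=> j; rewrite mem_pblock coverP inE.
have fP : forall j, f j \in P by move=> j; apply: pblock_mem; rewrite coverP inE.
have finj : {in [set j | qf j] &, injective f}.
  have key : forall j1 j2 : 'I_k, qf j1 -> qf j2 -> f j1 = f j2 -> j1 < j2 -> False.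
    move=> j1 j2 q1 q2 e lt.
    move: q2; rewrite /qf => /andP [_ /negP]; apply.
    have ht : j1.-1 < k by have := ltn_ord j1; lia.
    apply/existsP; exists (Ordinal ht); apply/andP; split.
      by move: q1; rewrite /qf /= => /andP [/andP [h0 _] _]; lia.
    apply/existsP; exists (f j2); rewrite fP /=; apply/andP; split.
      by rewrite -e; apply: inB.
    exact: inB.
  move=> j1 j2; rewrite !inE => q1 q2 e.
  case: (ltngtP j1 j2) => h; [case: (key _ _ q1 q2 e h) | case: (key _ _ q2 q1 (esym e) h) |].
  exact: ord_eq.
rewrite -(card_in_imset finj).
apply: leq_trans (_ : #|P :\ blk k m| <= _).
  apply: subset_leq_card; apply/subsetP => Bk /imsetP [j]; rewrite inE => qj ->.
  rewrite !inE fP andbT; apply/eqP => e.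
  have := inB j.-1; rewrite -/(f j) e inE.
  move: qj; rewrite /qf => /andP [/andP [h0 h1] _].
  have hj : j.-1 <= n.+1 by lia.
  have := pos_mid hj.
  by case/andP => /negPf -> /negPf ->.
move: (cardsD1 (blk k m) P); rewrite Hblk cardP /= => ->; by rewrite add1n subn1.
Qed.

Lemma prod_bound (c0 : nat) :
  \prod_(j < k) (if (j : nat) == n.+3 then 1 else if (j : nat) == 0 then c0 else if det j then B else N)
  <= c0 * N ^ #|[set j | qf j]| * B.+1 ^ k.
Proof.
apply: leq_trans (_ : \prod_(j < k) (if qf j then N else if (j : nat) == 0 then c0 else B.+1) <= _).
  apply: leq_prod => j _; rewrite /qf.
  case: (eqVneq (j : nat) n.+3) => e1.
    by rewrite e1 ltnn andbF andFb.
  case: (eqVneq (j : nat) 0) => e0.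
    by rewrite e0.
  have h1 : (0 < j) && (j <= n.+2) by have := ltn_ord j; lia.
  by rewrite h1 /=; case: (det j) => //=; lia.
rewrite (bigID qf) /= (eq_bigr (fun _ => N)); last by move=> i ->.
rewrite prod_nat_const.
have -> : #|[set j | qf j]| = #|qf| by apply: eq_card => j; rewrite inE.
rewrite -mulnA mulnCA.
apply: leq_mul; first exact: leqnn.
rewrite (bigD1 ord0) /=; last by rewrite /qf.
apply: leq_mul; first exact: leqnn.
rewrite (eq_bigr (fun _ => B.+1)); last first.
  move=> j /andP [hq hj]; rewrite (negbTE hq); case: eqP => // e; case/eqP: hj; exact: ord_eq.
rewrite prod_nat_const; apply: leq_pexp2l => //.
by apply: leq_trans (max_card _) _; rewrite card_ord.
Qed.

Lemma walkS (S : {set {ffun 'I_k -> 'I_N}}) c0 : S \subset ES ->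
  (forall a, a \in S -> #|[set (b : {ffun _ -> _}) (posO 0) | b in agree S 0 a]| <= c0) ->
  (forall a, a \in S -> #|[set (b : {ffun _ -> _}) (posO n.+3) | b in agree S n.+3 a]| <= 1) ->
  #|S| <= c0 * N ^ (k./2 - 1) * B.+1 ^ k.
Proof.
move=> sS h0 hl.
case: (posnP N) => [N0|Npos].
  suff -> : S = set0 by rewrite cards0.
  apply/setP => a; exfalso; have := ltn_ord (a ord0); lia.
apply: leq_trans (_ : c0 * N ^ #|[set j | qf j]| * B.+1 ^ k <= _); last first.
  rewrite leq_mul2r leq_mul2l leq_pexp2l ?free_count; lia.
apply: leq_trans (prod_bound c0).
apply: (walk_bound (obs := fun j (b : {ffun 'I_k -> 'I_N}) => b (posO j))
  (c := fun j => if j == n.+3 then 1 else if j == 0 then c0 else if det j then B else N)).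
  move=> a b aS bS e; apply/ffunP => x; have [j hj <-] := pos_surj x; exact: e j hj.
move=> j a hj aS.
case: (eqVneq j n.+3) => e1.
  by rewrite e1; apply: hl.
case: (eqVneq j 0) => e0.
  by rewrite e0; apply: h0.
by apply: step_bound => //; lia.
Qed.

Definition mO : 'I_k := Ordinal (ltnW (ltnW Hm)).
Definition mp1 : 'I_k := Ordinal (ltnW Hm).
Definition mp2 : 'I_k := Ordinal Hm.

Lemma posO_last : posO n.+3 = mp1.
Proof. by apply: ord_eq; rewrite pos_last. Qed.
Lemma posO_first : posO 0 = mp2.
Proof. by apply: ord_eq; rewrite pos_first. Qed.

Lemma ordS_mO : ordS mO = mp1.
Proof. apply: ord_eq => /=; rewrite modn_small //; lia. Qed.
Lemma ordS_mp1 : ordS mp1 = mp2.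
Proof. apply: ord_eq => /=; rewrite modn_small //; lia. Qed.

Definition X1 := [set i in ES | [exists s, (s != mp1) && (i mp1 == i s)]].

Lemma X1_bound : #|X1| <= k * (N * N ^ (k./2 - 1) * B.+1 ^ k).
Proof.
pose S1 s := [set i in ES | i mp1 == i s].
apply: leq_trans (_ : \sum_(s in [pred s | s != mp1]) #|S1 s| <= _).
  apply: card_cover => i; rewrite inE => /andP [iE /existsP [s /andP [ns e]]].
  by exists s => //; rewrite inE iE.
apply: leq_trans (_ : \sum_(s in [pred s : 'I_k | s != mp1]) (N * N ^ (k./2 - 1) * B.+1 ^ k) <= _).
  apply: leq_sum => s ns.
  apply: walkS.
  - by apply/subsetP => i; rewrite inE => /andP [].
  - by move=> a _; apply: leq_trans (max_card _) _; rewrite card_ord.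
  - move=> a aS; apply: leq_trans (_ : #|[set a s]| <= 1); last by rewrite cards1.
    apply: subset_leq_card; apply/subsetP => v /imsetP [b hb ->].
    have [t ht et] := pos_surj s.
    have tn : t != n.+3.
      apply: contra ns => /eqP e; apply/eqP; by rewrite -et e posO_last.
    have bS := agreeS hb.
    move: bS; rewrite /S1 !inE => /andP [_ /eqP e1].
    rewrite posO_last e1 -et (agreeP hb) //; lia.
rewrite sum_nat_const leq_mul2r; apply/orP; right.
by apply: leq_trans (max_card _) _; rewrite card_ord.
Qed.

Definition C3 := [set t : 'I_N * 'I_N * 'I_N |
   simF (t.1.1, t.1.2) (t.1.2, t.2) && (t.2 != t.1.1)].

Definition X2 := [set i in ES | i mO != i mp2].

Lemma X2_bound : #|X2| <= #|C3| * (1 * N ^ (k./2 - 1) * B.+1 ^ k).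
Proof.
pose S2 t := [set i in ES | (i mO, i mp1, i mp2) == t].
apply: leq_trans (_ : \sum_(t in C3) #|S2 t| <= _).
  apply: card_cover => i; rewrite inE => /andP [iE ne].
  exists (i mO, i mp1, i mp2); last by rewrite inE iE eqxx.
  rewrite inE /= eq_sym ne andbT.
  have := ESP iE Hblk (_ : mO \in blk k m) (_ : mp1 \in blk k m).
  by rewrite ordS_mO ordS_mp1; apply; rewrite inE /= eqxx ?orbT.
rewrite -sum_nat_const; apply: leq_sum => t _.
have sS : S2 t \subset ES by apply/subsetP => i; rewrite inE => /andP [].
have S2P : forall b, b \in S2 t -> (b mO, b mp1, b mp2) = t.
  by move=> b; rewrite inE => /andP [_ /eqP].
apply: walkS => //.
- move=> a _; apply: leq_trans (_ : #|[set t.2]| <= 1); last by rewrite cards1.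
  apply: subset_leq_card; apply/subsetP => v /imsetP [b hb ->].
  have bS := agreeS hb.
  by rewrite inE posO_first -(S2P b bS).
- move=> a _; apply: leq_trans (_ : #|[set t.1.2]| <= 1); last by rewrite cards1.
  apply: subset_leq_card; apply/subsetP => v /imsetP [b hb ->].
  have bS := agreeS hb.
  by rewrite inE posO_last -(S2P b bS).
Qed.

Lemma drop2_pair (T : eqType) (g : 'I_k -> T) (l : 'I_n.+2) : g mO = g mp2 ->
  drop2 g m l = g (@shO k m l) /\ drop2 g m (ordS l) = g (ordS (@shO k m l)).
Proof.
move=> e; have hl := ltn_ord l; split.
  case: (eqVneq (l : nat) m) => el.
    rewrite (@drop2E _ _ _ _ _ mO); last by rewrite /dsh /= el leqnn.
    rewrite e; congr g; apply: ord_eq; rewrite /= /shift el ltnn //.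
  apply: drop2E; rewrite /= /shift /dsh; case: ifP; case: ifP; lia.
apply: drop2E => /=.
rewrite (mod2 (x := _.+1)); last by rewrite /shift; case: ifP; lia.
rewrite (mod2 (x := l.+1)); last by lia.
rewrite /shift /dsh; case: ifP; case: ifP; case: ifP; case: ifP; lia.
Qed.

Lemma del_pairs (l l' : 'I_n.+2) :
  [exists C in delblock P m, (l \in C) && (l' \in C)] =
  [exists Bk in P, (@shO k m l \in Bk) && (@shO k m l' \in Bk)].
Proof.
apply/existsP/existsP => [[C /andP [/delblockP [Bk /andP [hB _] ->] /andP [h1 h2]]]|[Bk /andP [hB /andP [h1 h2]]]].
  move: h1 h2; rewrite (@in_pre k m Bk l) (@in_pre k m Bk l') => h1 h2.
  by exists Bk; rewrite hB h1 h2.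
exists (pre m Bk); rewrite (@in_pre k m Bk l) (@in_pre k m Bk l') h1 h2 !andbT.
apply/delblockP; exists Bk => //; rewrite hB /=.
apply/eqP => eb; move: h1; rewrite eb inE /= /shift; have := ltn_ord l; case: ifP; lia.
Qed.

Lemma drop2_E (i : {ffun 'I_k -> 'I_N}) : i \in ES -> i mO = i mp2 ->
  [ffun j => drop2 (fun l => i l) m j] \in Eset (@simF) N (delblock P m).
Proof.
move=> iE e; rewrite inE; apply/forallP => l; apply/forallP => l'.
rewrite !ffunE del_pairs.
have [a1 a2] := drop2_pair l e. have [b1 b2] := drop2_pair l' e.
rewrite a1 a2 b1 b2.
by move: iE; rewrite inE => /forallP /(_ (@shO k m l)) /forallP /(_ (@shO k m l')).
Qed.

Definition X3 := [set i in ES | [&& i mO == i mp2,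
   [forall s, (s != mp1) ==> (i mp1 != i s)] &
   ~~ adopted (delblock P m) (drop2 (fun l => i l) m)]].

Lemma recover (x : 'I_k) : x != mp1 -> exists j : 'I_n.+2,
  forall (T : eqType) (g : 'I_k -> T), g mO = g mp2 -> drop2 g m j = g x.
Proof.
move=> nx; have hx := ltn_ord x.
case: (ltnP m.+2 x) => h.
  have hj : x - 2 < n.+2 by lia.
  exists (Ordinal hj) => T g _; apply: drop2E => /=; rewrite /dsh; case: ifP; lia.
case: (eqVneq (x : nat) m.+2) => e2.
  have hj : m < n.+2 by lia.
  exists (Ordinal hj) => T g e; rewrite (@drop2E _ _ _ _ _ mO); last by rewrite /dsh /= leqnn.
  by rewrite e; congr g; apply: ord_eq; rewrite e2.
have hx1 : (x : nat) != m.+1 by apply: contra nx => /eqP ex; apply/eqP; exact: ord_eq.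
have hj : (x : nat) < n.+2 by lia.
exists (Ordinal hj) => T g _; apply: drop2E => /=; rewrite /dsh; case: ifP; lia.
Qed.

Lemma X3_bound : #|X3| <= #|Ebar (@simF) N (delblock P m)| * N.
Proof.
pose phi (i : {ffun 'I_k -> 'I_N}) := ([ffun j => drop2 (fun l => i l) m j], i mp1).
have X3P : forall i, i \in X3 -> [/\ i \in ES, i mO = i mp2 &
    ~~ adopted (delblock P m) (drop2 (fun l => i l) m)].
  by move=> i; rewrite inE => /andP [iE /and3P [/eqP e _ na]].
have inj : {in X3 &, injective phi}.
  move=> i i' /X3P [_ e _] /X3P [_ e' _] [e1 e2]; apply/ffunP => x.
  case: (eqVneq x mp1) => [->|nx] //.
  have [j hj] := recover nx.
  rewrite -(hj _ (fun l => i l) e) -(hj _ (fun l => i' l) e').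
  by have := congr1 (fun f : {ffun _ -> _} => f j) e1; rewrite /= !ffunE.
rewrite -(card_in_imset inj).
apply: leq_trans (_ : #|setX (Ebar (@simF) N (delblock P m)) [set: 'I_N]| <= _).
  2: by rewrite cardsX cardsT card_ord.
apply: subset_leq_card; apply/subsetP => _ /imsetP [i hi ->].
have [iE e na] := X3P i hi.
rewrite in_setX in_setT andbT inE drop2_E //.
have -> : (fun l => (phi i).1 l) = drop2 (fun l => i l) m.
  by apply: functional_extensionality => l; rewrite ffunE.
exact: na.
Qed.

Lemma invP : invb P.
Proof.
move=> B1 B2 x h1 h2 x1 x2.
by rewrite -(def_pblock trivP h1 x1) -(def_pblock trivP h2 x2).
Qed.

Lemma Ebar_cover : #|Ebar (@simF) N P| <= #|X1| + #|X2| + #|X3|.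
Proof.
apply: leq_trans (_ : #|X1 :|: X2 :|: X3| <= _); last first.
  rewrite !cardsU; apply: leq_trans (leq_subr _ _) _; rewrite leq_add2r.
  exact: leq_subr.
apply: subset_leq_card; apply/subsetP => i; rewrite inE => /andP [iE na].
have inX : forall (C : pred {ffun 'I_k -> 'I_N}), (i \in [set j in ES | C j]) = C i.
  by move=> C; rewrite inE iE.
rewrite !in_setU /X1 /X2 /X3 !inX.
case: (boolP [exists s, (s != mp1) && (i mp1 == i s)]) => //= h1.
case: (eqVneq (i mO) (i mp2)) => //= e.
apply/andP; split.
  apply/forallP => s; apply/implyP => ns; apply: contra h1 => /eqP es.
  by apply/existsP; exists s; rewrite ns es eqxx.
apply: contra na => ad.
apply: (@consist _ (i mO) n.+2 P (fun l => i l) m) => //.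
  exact: invP.
split.
  rewrite (nfO _ _ (ltnW (ltnW Hm))) (nfO _ _ Hm); exact: e.
move=> s hs ns; rewrite (nfO _ _ (ltnW Hm)) (nfO _ _ hs).
apply/eqP => es; move/negP: h1; apply; apply/existsP; exists (Ordinal hs).
rewrite /mp1 es eqxx andbT; exact: ns.
Qed.
End Count.

End Helpers.
Import Helpers.
Import Order.TTheory GRing.Theory Num.Theory.

Theorem mainTheorem6
  (sim : forall N : nat, rel ('I_N * 'I_N))
  (Hequiv : forall N : nat,
     [/\ reflexive (sim N), symmetric (sim N) & transitive (sim N)])
  (Hflip : forall (N : nat) (p q : 'I_N), sim N (p, q) (q, p))
  (HC2 : exists B : nat, forall (N : nat) (p q r : 'I_N),
     #|[set s : 'I_N | sim N (p, q) (r, s)]| <= B)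
  (HC3 : littleo
     (fun N => (#|[set t : 'I_N * 'I_N * 'I_N |
                   sim N (t.1.1, t.1.2) (t.1.2, t.2) && (t.2 != t.1.1)]|%:R)%R)
     (fun N => ((N%:R : rat) ^+ 2)%R))
  (k : nat) (Hk4 : 4 <= k) (Hkev : ~~ odd k)
  (P : {set {set 'I_k}}) (HP : NCpair P)
  (m : nat) (Hm : m.+2 < k) (Hblk : blk k m \in P) :
  exists err : nat -> rat,
    littleo err (fun N => ((N%:R : rat) ^+ (1 + k./2))%R) /\
    forall N : nat,
      ((#|Ebar sim N P|%:R : rat)
        <= (N%:R : rat) * #|Ebar sim N (delblock P m)|%:R + err N)%R.
Proof.
case: HC2 => B HB.
case: k Hk4 Hkev P HP m Hm Hblk => [|[|[|[|n]]]] // Hk4 Hkev P HP m Hm Hblk.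
have HP' : pair_partition P by case/andP: HP.
pose h := (n.+4)./2 - 1.
pose D := B.+1 ^ n.+4.
pose c3 N := #|[set t : 'I_N * 'I_N * 'I_N |
                   sim N (t.1.1, t.1.2) (t.1.2, t.2) && (t.2 != t.1.1)]|.
exists (fun N => ((n.+4 * (N * N ^ h * D) + c3 N * (1 * N ^ h * D))%:R : rat)); split; last first.
  move=> N.
  have e1 := Ebar_cover N sim HP' Hm Hblk.
  have b1 := X1_bound HP' Hm Hblk (HB N).
  have b2 := X2_bound HP' Hm Hblk (HB N).
  have b3 := X3_bound N sim HP' Hm Hblk.
  rewrite -natrM -natrD ler_nat.
  apply: leq_trans e1 _.
  rewrite [X in _ <= X]addnC; apply: leq_add; last by rewrite mulnC.
  apply: leq_add; [exact: b1 | exact: b2].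
move=> eps eps0.
have D0 : (0 < (D%:R : rat))%R by rewrite ltr0n expn_gt0.
pose eps' := (eps / (2 * D%:R))%R.
have eps'0 : (0 < eps')%R by apply: divr_gt0 => //; rewrite mulr_gt0.
case: (HC3 eps' eps'0) => N0 hN0.
pose M := Num.Def.archi_bound ((2 * (n.+4)%:R * D%:R) / eps : rat)%R.
exists (maxn N0 M) => N hN.
have hN0' : N0 <= N by move: hN; rewrite geq_max => /andP [].
have hM : M <= N by move: hN; rewrite geq_max => /andP [].
have c3b := hN0 N hN0'.
have arch : ((2 * (n.+4)%:R * D%:R) / eps < N%:R :> rat)%R.
  apply: (lt_le_trans (archi_boundP _)); last by rewrite ler_nat.
  by apply: divr_ge0; [rewrite !mulr_ge0 | exact: ltW].
rewrite ger0_norm ?ler0n //.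
have eexp : 1 + (n.+4)./2 = h.+2.
  rewrite /h /=; move: (n./2) => q; lia.
clearbody h D.
rewrite eexp natrD !natrM natrX !exprS.
set x := (N%:R : rat). set X := (x ^+ h)%R.
have x0 : (0 <= x)%R by rewrite ler0n.
have X0 : (0 <= X)%R by rewrite exprn_ge0.
rewrite ger0_norm ?ler0n // in c3b.
have a : (2 * (n.+4)%:R * D%:R < eps * x)%R by rewrite -ltr_pdivrMl // mulrC.
have ha : (2 * (n.+4)%:R * D%:R * (x * X) <= eps * x * (x * X))%R.
  by apply: ler_wpM2r; [rewrite mulr_ge0 | exact: ltW].
have hb : ((c3 N)%:R * (X * D%:R) <= eps' * x ^+ 2 * (X * D%:R))%R.
  by apply: ler_wpM2r => //; rewrite mulr_ge0 // ltW.
have he : (eps' * x ^+ 2 * (X * D%:R) = eps / 2 * (x * (x * X)))%R.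
  by rewrite /eps'; field; exact: lt0r_neq0.
rewrite he in hb.
rewrite ?mulr1 ?mul1r.
lra.
Qed.
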